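(* Let $R$ be a ring such that $2$ is not invertible in $R$. Then $R$ is a GSWNC ring if and only if $R$ is a GSNC ring or $R$ is a strongly weakly nil-clean ring.
   Context: All rings are associative with identity. An element $a$ of a ring is strongly nil-clean if $a = e + q$ with $e$ idempotent, $q$ nilpotent and $eq = qe$; it is strongly weakly nil-clean if there exist an idempotent $e$ and a nilpotent $q$ with $eq = qe$ such that $a = q + e$ or $a = q - e$. A ring is strongly weakly nil-clean if all its elements are strongly weakly nil-clean; it is GSNC if every non-invertible element is strongly nil-clean, and GSWNC if every non-invertible element is strongly weakly nil-clean. *)

(* Defs.v *)
From HB Require Import structures.
From mathcomp Require Import all_boot all_order all_algebra.
Set Implicit Arguments. Unset Strict Implicit. Unset Printing Implicit Defensive.
Import GRing.Theory.
Local Open Scope ring_scope.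

Definition idempotent_el (R : unitRingType) (e : R) : Prop := e * e = e.
Definition nilpotent_el (R : unitRingType) (q : R) : Prop := exists n : nat, q ^+ n = 0.

Definition strongly_nil_clean_el (R : unitRingType) (a : R) : Prop :=
  exists e q : R, [/\ idempotent_el e, nilpotent_el q, e * q = q * e & a = e + q].

Definition strongly_weakly_nil_clean_el (R : unitRingType) (a : R) : Prop :=
  exists e q : R, [/\ idempotent_el e, nilpotent_el q, e * q = q * e &
                      a = q + e \/ a = q - e].

Definition strongly_weakly_nil_clean_ring (R : unitRingType) : Prop :=
  forall a : R, strongly_weakly_nil_clean_el a.

Definition GSNC (R : unitRingType) : Prop :=
  forall a : R, a \isn't a GRing.unit -> strongly_nil_clean_el a.

Definition GSWNC (R : unitRingType) : Prop :=
  forall a : R, a \isn't a GRing.unit -> strongly_weakly_nil_clean_el a.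

(* Main.v *)
Require Import Defs.
From mathcomp Require Import all_boot all_order all_algebra.
Set Implicit Arguments. Unset Strict Implicit. Unset Printing Implicit Defensive.
Import GRing.Theory.
Local Open Scope ring_scope.

Section S.
Variable R : unitRingType.
Implicit Types a b c e q x y : R.

Lemma nilX a n k : a ^+ n = 0 -> (n <= k)%N -> a ^+ k = 0.
Proof. by move=> h /subnKC <-; rewrite exprD h mul0r. Qed.

Lemma nilD a b : GRing.comm a b -> nilpotent_el a -> nilpotent_el b -> nilpotent_el (a + b).
Proof.
move=> cab [n hn] [m hm]; exists (n + m)%N; rewrite exprDn_comm //.
rewrite big1 // => i _.
case: (leqP m i) => hi; first by rewrite (nilX hm hi) mulr0 mul0rn.
have : (n <= n + m - i)%N by rewrite -addnBA ?leq_addr // ltnW.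
by move=> h; rewrite (nilX hn h) mul0r mul0rn.
Qed.

Lemma nilM a c : GRing.comm c a -> nilpotent_el a -> nilpotent_el (c * a).
Proof. by move=> cca [n hn]; exists n; rewrite exprMn_comm // hn mulr0. Qed.

Lemma nilMr a c : GRing.comm a c -> nilpotent_el a -> nilpotent_el (a * c).
Proof. by move=> cac ha; rewrite cac; apply: nilM. Qed.

Lemma nilN a : nilpotent_el a -> nilpotent_el (- a).
Proof. by move=> [n hn]; exists n; rewrite exprNn hn mulr0. Qed.

Lemma bez p r y : (0 < p)%N -> coprime p r -> y *+ p = 0 -> y *+ r = 0 -> y = 0.
Proof.
move=> p0 cpr hp hr; have [a _ /dvdnP [k hk]] := Bezoutl r p0.
move: cpr; rewrite /coprime => /eqP g1; rewrite g1 in hk.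
have : y *+ (1 + a * r) = 0 by rewrite hk mulnC mulrnA hp mul0rn.
by rewrite mulrnDr mulnC mulrnA hr mul0rn addr0.
Qed.


Definition central c := forall x, GRing.comm c x.

Lemma commC c d a b : central c -> central d -> GRing.comm a b ->
  GRing.comm (c * a) (d * b).
Proof.
move=> hc hd hab; rewrite /GRing.comm.
rewrite -!mulrA (mulrA a d) -(hd a) -mulrA hab (mulrA b c) -(hc b) -mulrA.
by rewrite !mulrA (hc d).
Qed.

Lemma cmul e a b : central e -> e * e = e -> (e * a) * (e * b) = e * (a * b).
Proof. by move=> hc he; rewrite -mulrA (mulrA a e) -(hc a) -mulrA !mulrA he. Qed.

Lemma cmul0 e d a b : central e -> e * d = 0 -> (e * a) * (d * b) = 0.
Proof. by move=> hc hd; rewrite (hc a) -mulrA (mulrA e d) hd mul0r mulr0. Qed.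

Lemma centralC e : central e -> central (1 - e).
Proof. by move=> hc x; apply/commr_sym/commrD; [exact: commr1|apply/commrN/commr_sym/hc]. Qed.

Lemma central1 : central 1.
Proof. by move=> x; rewrite /GRing.comm mul1r mulr1. Qed.

Lemma neg_snc c w : central c -> c * c = c -> nilpotent_el (c *+ 2) -> c * w = w ->
  strongly_nil_clean_el w -> strongly_nil_clean_el (- w).
Proof.
move=> hc hcc h2 hw [i [q [hi hq hiq hwe]]]; rewrite hwe in hw *.
exists (c * i), (- (c * q) - (c * i) *+ 2); split.
- by rewrite /idempotent_el cmul // hi.
- apply: nilD.
  + apply/commr_sym/commrN/commr_sym/commrN/commrMn; apply: commC => //; exact/esym.
  + exact/nilN/nilM.
  + apply: nilN; rewrite -mulrnAl.
    apply: nilMr => //; apply/commr_sym/commrMn/commr_sym/hc.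
- apply/commrD; first by apply/commrN; apply: commC => //; exact/esym.
  by apply/commrN/commrMn.
- rewrite -{1}hw mulrDr; set a := c * i; set b := c * q.
  by rewrite mulr2n !opprD addrCA (addrA a) subrr add0r addrC.
Qed.

Lemma comb0 e f u v : central e -> central f -> e * e = e -> f * f = f ->
  e * f = 0 -> f * e = 0 -> strongly_nil_clean_el u ->
  strongly_nil_clean_el v -> strongly_nil_clean_el (e * u + f * v).
Proof.
move=> hc hf he hff ef fe [i1 [q1 [hi1 hq1 c1 ->]]] [i2 [q2 [hi2 hq2 c2 ->]]].
exists (e * i1 + f * i2), (e * q1 + f * q2); split.
- rewrite /idempotent_el mulrDl !mulrDr !cmul // hi1 hi2 !cmul0 //.
  by rewrite addr0 add0r.
- apply: nilD; [|exact: nilM|exact: nilM].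
  by rewrite /GRing.comm !cmul0.
- rewrite mulrDl !mulrDr !mulrDl !cmul // !cmul0 // c1 c2.
  by rewrite !addr0 !add0r.
- by rewrite !mulrDr addrA addrA; congr (_ + _); rewrite -!addrA (addrC (e * q1)).
Qed.

Lemma comb e u v : central e -> e * e = e -> strongly_nil_clean_el u ->
  strongly_nil_clean_el v -> strongly_nil_clean_el (e * u + (1 - e) * v).
Proof.
move=> hc he; apply: comb0 => //; first exact: centralC.
- by rewrite mulrBr mulr1 mulrBl mul1r he subrr subr0.
- by rewrite mulrBr mulr1 he subrr.
- by rewrite mulrBl mul1r he subrr.
Qed.


Lemma snc_swnc a : strongly_nil_clean_el a -> strongly_weakly_nil_clean_el a.
Proof. by move=> [e [q [he hq c ->]]]; exists e, q; split => //; left; rewrite addrC. Qed.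

Lemma sncN_swnc a : strongly_nil_clean_el (- a) -> strongly_weakly_nil_clean_el a.
Proof.
move=> [e [q [he hq c hae]]]; exists e, (- q); split => //.
- exact: nilN.
- by rewrite mulrN c mulNr.
- by right; rewrite -[a]opprK hae opprD addrC.
Qed.

Lemma swnc_snc a : strongly_weakly_nil_clean_el a ->
  strongly_nil_clean_el a \/ strongly_nil_clean_el (- a).
Proof.
move=> [e [q [he hq c [->|->]]]].
- by left; exists e, q; split => //; rewrite addrC.
- right; exists e, (- q); split => //; first exact: nilN.
  + by rewrite mulrN c mulNr.
  + by rewrite opprB addrC.
Qed.

Lemma idemX e n : e * e = e -> e ^+ n.+1 = e.
Proof. by move=> he; elim: n => // n IH; rewrite exprS IH he. Qed.

Lemma gsnc_of (h2 : nilpotent_el (2 : R)) : GSWNC R -> GSNC R.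
Proof.
move=> H a ha; case: (swnc_snc (H a ha)) => // hn.
rewrite -[a]opprK; apply: (neg_snc (c := 1)) => //.
- exact: central1.
- by rewrite mulr1.
- by rewrite mul1r.
Qed.


Lemma swnc_of e q (h2 : (2 : R) \isn't a GRing.unit) :
  e * e = e -> nilpotent_el q -> e * q = q * e -> (2 : R) = q - e -> e != 0 ->
  GSWNC R -> strongly_weakly_nil_clean_ring R.
Proof.
move=> he [n0 hn0] ceq h2e enz H.
set N := n0.+1.
have hN : q ^+ N = 0 by apply: (nilX hn0); rewrite /N.
have qE : q = 2 + e by rewrite h2e subrK.
set f := 1 - e.
have ef : e * f = 0 by rewrite mulrBr mulr1 he subrr.
have fe : f * e = 0 by rewrite mulrBl mul1r he subrr.
have hff : f * f = f by rewrite mulrBr mulr1 fe subr0.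
have e3 : e *+ 3 ^ N = 0.
  have : (e * q) ^+ N = 0 by rewrite exprMn_comm // hN mulr0.
  by rewrite qE mulrDr mulr_natr he -mulrSr exprMn_n idemX.
have f2 : f *+ 2 ^ N = 0.
  have cfq : GRing.comm f q by rewrite /GRing.comm /f mulrBl mulrBr mul1r mulr1 ceq.
  have : (f * q) ^+ N = 0 by rewrite exprMn_comm // hN mulr0.
  by rewrite qE mulrDr fe addr0 mulr_natr exprMn_n idemX.
have cop : coprime (3 ^ N) (2 ^ N) by rewrite coprimeXl // coprimeXr.
have p0 : (0 < 3 ^ N)%N by rewrite expn_gt0.
have z1 : forall x, e * x * f = 0.
  move=> x; apply: (bez p0 cop).
  - by rewrite -!mulrnAl e3 !mul0r.
  - by rewrite -mulrnAr f2 mulr0.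
have z2 : forall x, f * x * e = 0.
  move=> x; apply: (bez p0 cop).
  - by rewrite -mulrnAr e3 mulr0.
  - by rewrite -!mulrnAl f2 !mul0r.
have ef1 : e + f = 1 by rewrite /f addrC subrK.
have hc : central e.
  move=> x; rewrite /GRing.comm.
  have -> : e * x = e * x * e by rewrite -{1}[e * x]mulr1 -ef1 mulrDr z1 addr0.
  by rewrite -[x * e]mul1r -ef1 mulrDl !mulrA z2 addr0.
have hcf : central f by exact: centralC.
have fnz : f != 0.
  apply/eqP => f0; move: h2 => /negP; apply; apply/unitrP.
  have e1 : e = 1 by rewrite -ef1 f0 addr0.
  have [a _ /dvdnP [k hk]] := Bezoutl 2 p0.
  have g1 : gcdn (3 ^ N) 2 = 1%N by apply/eqP; exact: (coprimeXl N (isT : coprime 3 2)).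
  rewrite g1 in hk.
  have h0 : (1 + a * 2)%:R = 0 :> R.
    have e3p : (3 ^ N)%:R = 0 :> R by rewrite -e1.
    by rewrite hk natrM e3p mulr0.
  have h1 : - (a * 2)%:R = 1 :> R.
    by apply/esym/eqP; rewrite -addr_eq0 -[1 : R]/(1%:R) -natrD h0.
  exists (- (a%:R)); rewrite mulNr mulrN -!natrM (mulnC 2); split => //.
have nu : forall c d x, central c -> c * d = 0 -> d != 0 -> c * x \isn't a GRing.unit.
  move=> c d x hc0 cd dnz; apply/negP => hu; move/eqP: dnz; apply.
  have : (c * x)^-1 * (c * x * d) = d by rewrite mulrA mulVr // mul1r.
  by rewrite (hc0 x) -mulrA cd mulr0 mulr0.
have hf2 : nilpotent_el (f *+ 2) by exists N; rewrite exprMn_n idemX.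
have fpos : forall x, strongly_nil_clean_el (f * x).
  move=> x; case: (swnc_snc (H _ (nu f e x hcf fe enz))) => // hn.
  rewrite -[f * x]opprK; apply: (neg_snc hcf hff hf2) => //.
  by rewrite mulrN mulrA hff.
have fneg : forall x, strongly_nil_clean_el (- (f * x)).
  move=> x; apply: (neg_snc hcf hff hf2); [by rewrite mulrA hff|exact: fpos].
have xE : forall x, e * (e * x) + f * (f * x) = x.
  by move=> x; rewrite !mulrA he hff -mulrDl ef1 mul1r.
move=> x; case: (swnc_snc (H _ (nu e f x hc ef fnz))) => hx.
- apply: snc_swnc; rewrite -(xE x); exact: comb.
- apply: sncN_swnc; rewrite -(xE x) opprD -[- (e * (e * x))]mulrN -[- (f * (f * x))]mulrN; exact: comb.
Qed.

End S.

Theorem lemma2p56 (R : unitRingType) (h2 : (2 : R) \isn't a GRing.unit) :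
  GSWNC R <-> GSNC R \/ strongly_weakly_nil_clean_ring R.
Proof.
split; last first.
  by case=> [G a ha|S a _]; [exact: snc_swnc (G a ha)|exact: S].
move=> H; have [e [q [he hq ceq [h|h]]]] := H _ h2.
- left; apply: gsnc_of => //.
  have qE : q = 2 - e by rewrite h addrK.
  have eq1 : e * q = e by rewrite qE mulrBr he mulr_natr mulr2n addrK.
  have eqn : forall n, e * q ^+ n = e.
    by elim=> [|n IH]; rewrite ?mulr1 // exprSr mulrA IH eq1.
  have e0 : e = 0 by case: hq => n hn; rewrite -(eqn n) hn mulr0.
  by rewrite h e0 addr0.
- have [e0|enz] := eqVneq e 0.
    by left; apply: gsnc_of => //; rewrite h e0 subr0.
  by right; apply: (swnc_of h2 he hq ceq h enz).
Qed.
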